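(* Let $X=\{v_1,\dots,v_n\}$ be a set of $n$ unit vectors in $\mathbb{R}^d$ such that $\langle v_i,v_j\rangle\in\{a,b\}$ for all $i\neq j$, where $-1\le a<b<1$. Let $G=(\langle v_i,v_j\rangle)_{i,j=1}^n$ be its Gram matrix, $J$ the $n\times n$ all-ones matrix, and \[ S=\frac{2G-(a+b)J+(a+b-2)I}{b-a}. \] Let $\lambda_1\ge\dots\ge\lambda_n$ be the eigenvalues of $S$ counted with multiplicity. (i) If $a+b\ge 0$, then $\lambda_i=\frac{a+b-2}{b-a}$ for all $d+1\le i\le n-1$ and $\lambda_n\le\frac{a+b-2}{b-a}$; i.e. $S$ has smallest eigenvalue $\lambda_n$ (counted once) and second smallest eigenvalue $\frac{a+b-2}{b-a}$ with multiplicity at least $n-d-1$. (ii) If $a+b<0$, then the smallest eigenvalue of $S$ is $\frac{a+b-2}{b-a}$, with multiplicity at least $n-d-1$.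
   Context: $S$ is a Seidel matrix: a real symmetric matrix with zero diagonal and off-diagonal entries $\pm1$ (the entry is $+1$ where the inner product is $b$ and $-1$ where it is $a$). *)

(* Defs.v *)
From HB Require Import structures.
From mathcomp Require Import all_boot all_order all_algebra.
From mathcomp Require Import reals.
Set Implicit Arguments. Unset Strict Implicit. Unset Printing Implicit Defensive.
Import Order.TTheory GRing.Theory Num.Theory.
Local Open Scope ring_scope.

Definition dotv (R : realType) (d : nat) (x y : 'rV[R]_d) : R :=
  \sum_(k < d) x 0 k * y 0 k.

Definition gram (R : realType) (n d : nat) (v : 'I_n -> 'rV[R]_d) : 'M[R]_n :=
  \matrix_(i, j) dotv (v i) (v j).

Definition seidelS (R : realType) (n d : nat) (a b : R)
    (v : 'I_n -> 'rV[R]_d) : 'M[R]_n :=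
  (b - a)^-1 *: (2 *: gram v - (a + b) *: const_mx 1 + (a + b - 2)%:M).

(* s lists the eigenvalues of M with multiplicity, in non-increasing order:
   lambda_1 >= ... >= lambda_n, with lambda_(i+1) = s`_i. *)
Definition eigenvalues_desc (R : realType) (n : nat) (M : 'M[R]_n)
    (s : seq R) : Prop :=
  sorted (fun x y => y <= x) s /\
  char_poly M = \prod_(x <- s) ('X - x%:P).

(* Main.v *)
Require Import Defs.
From HB Require Import structures.
From mathcomp Require Import all_boot all_order all_algebra.
From mathcomp Require Import reals.
From mathcomp Require Import zify complex spectral.
Import Order.TTheory GRing.Theory Num.Theory.
Local Open Scope ring_scope.

Set Implicit Arguments. Unset Strict Implicit. Unset Printing Implicit Defensive.

Section Core.
Local Open Scope sesquilinear_scope.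
Variable C : numClosedFieldType.

Lemma quad_diag n (u D : 'rV[C]_n) :
  (u *m diag_mx D *m u ^t*) 0 0 = \sum_i D 0 i * (u 0 i * (u 0 i)^*).
Proof.
rewrite mul_mx_diag mxE; apply: eq_bigr => i _; rewrite !mxE.
by rewrite mulrCA mulrA.
Qed.

Lemma ctM k l p (X : 'M[C]_(k, l)) (Y : 'M[C]_(l, p)) :
  (X *m Y) ^t* = Y ^t* *m X ^t*.
Proof. by rewrite trmx_mul map_mxM. Qed.

Lemma core n m (P : 'M[C]_n) (D : 'rV[C]_n) (B : 'M[C]_(n, m)) :
  P *m P ^t* = 1%:M ->
  (forall w : 'rV_n, w *m B = 0 ->
     (w *m (P ^t* *m diag_mx D *m P) *m w ^t*) 0 0 <= 0) ->
  (#|[pred i | (0 < D 0 i)%R]| <= m)%N.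
Proof.
move=> PP hB.
set I := [pred i | 0 < D 0 i].
rewrite leqNgt; apply/negP => Hk.
pose E : 'M[C]_(#|I|, n) := \matrix_(j, i) (i == enum_val j)%:R.
have EE : E *m E^T = 1%:M.
  apply/matrixP => j k; rewrite !mxE.
  rewrite (bigD1 (enum_val j)) //= big1 ?addr0.
    rewrite !mxE eqxx (inj_eq enum_val_inj) mul1r.
    by case: (j == k).
  by move=> i /negPf ne; rewrite !mxE ne mul0r.
have rE : (#|I| <= \rank E)%N.
  have h := @mulmx1_min_rank _ _ _ _ E (1%:M : 'M_#|I|) E^T; rewrite mul1mx in h; exact: h EE.
set K := kermx (P *m B).
have rK : (n - m <= \rank K)%N.
  by rewrite mxrank_ker leq_sub2l // rank_leq_col.
have rEK : (0 < \rank (E :&: K)%MS)%N.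
  have := mxrank_sum_cap E K.
  have := rank_leq_col (E + K)%MS.
  lia.
set u := nz_row (E :&: K)%MS.
have u0 : u != 0.
  by rewrite nz_row_eq0 -mxrank_eq0 -lt0n.
have uE : (u <= E)%MS := submx_trans (nz_row_sub _) (capmxSl _ _).
have uK : (u <= K)%MS := submx_trans (nz_row_sub _) (capmxSr _ _).
have uI : forall i, i \notin I -> u 0 i = 0.
  move=> i iI; case/submxP: uE => x ->; rewrite !mxE big1 // => j _.
  rewrite !mxE; case: eqP => [ei|]; last by rewrite mulr0.
  by move: iI; rewrite ei enum_valP.
have uPB : (u *m P) *m B = 0 by rewrite -mulmxA; apply/sub_kermxP.
have := hB _ uPB.
have -> : (u *m P *m (P ^t* *m diag_mx D *m P) *m (u *m P) ^t*) =
          u *m diag_mx D *m u ^t*.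
  rewrite ctM !mulmxA -[u *m P *m P ^t*]mulmxA PP mulmx1.
  by rewrite -[u *m diag_mx D *m P *m P ^t*]mulmxA PP mulmx1.
rewrite quad_diag.
have [i ui] : exists i, u 0 i != 0.
  apply/existsP; move: u0; apply: contraR; rewrite negb_exists => /forallP h.
  by apply/eqP/rowP => i; rewrite mxE; apply/eqP; move: (h i); rewrite negbK.
have iI : i \in I by apply: contraR ui => /uI ->.
rewrite (bigD1 i) //= => H.
have : 0 < D 0 i * (u 0 i * (u 0 i)^*) + \sum_(j | j != i) D 0 j * (u 0 j * (u 0 j)^*).
  apply: ltr_wpDr.
    apply: sumr_ge0 => j _.
    case jI: (j \in I); first by apply: mulr_ge0; [apply: ltW; exact: jI| exact: mul_conjC_ge0].
    by rewrite uI ?jI // mul0r mulr0.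
  by apply: mulr_gt0; [exact: iI | rewrite mul_conjC_gt0].
by rewrite lt_leAnge H andbF.
Qed.
End Core.

Lemma char_poly_conj (F : comNzRingType) n (A P Q : 'M[F]_n) :
  Q *m P = 1%:M -> char_poly (Q *m A *m P) = char_poly A.
Proof.
move=> QP.
have QPp : map_mx polyC Q *m map_mx polyC P = 1%:M.
  by rewrite -map_mxM QP map_mx1.
have e : char_poly_mx (Q *m A *m P) =
   map_mx polyC Q *m char_poly_mx A *m map_mx polyC P.
  rewrite /char_poly_mx mulmxBr mulmxBl -!map_mxM.
  rewrite -[map_mx polyC Q *m _ *m map_mx polyC P]mulmxA -scalar_mxC mulmxA QPp mul1mx.
  by [].
rewrite /char_poly e !det_mulmx mulrC mulrA -det_mulmx.
by rewrite (mulmx1C QPp) det1 mul1r.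
Qed.

Section Sort.
Variable R : realDomainType.

Lemma count_all_ge (a : pred R) (t : seq R) k :
  (k <= size t)%N -> (forall j, (j < k)%N -> a t`_j) -> (k <= count a t)%N.
Proof.
move=> kt h.
rewrite -(cat_take_drop k t) count_cat.
have sz : size (take k t) = k.
  by rewrite size_take; case: ltnP => //; lia.
have : all a (take k t).
  by apply/(all_nthP 0) => j; rewrite sz => jk; rewrite nth_take //; apply: h.
rewrite all_count => /eqP ->; rewrite sz; lia.
Qed.

Lemma sorted_count_gt (s : seq R) c i : sorted (fun x y => y <= x) s ->
  (i < size s)%N -> c < s`_i -> (i.+1 <= count (fun x => (c < x)%R) s)%N.
Proof.
move=> ss iS ci; apply: count_all_ge => // j ji.
apply: lt_le_trans ci _.
have tr : transitive (fun x y : R => y <= x).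
  by move=> x y z h1 h2; apply: le_trans h2 h1.
have H := @sorted_leq_nth _ _ tr (fun x => lexx x) 0 s ss j i.
by apply: H; rewrite ?inE /=; lia.
Qed.

Lemma sorted_count_lt (s : seq R) c i : sorted (fun x y => y <= x) s ->
  (i < size s)%N -> s`_i < c -> (size s - i <= count (fun x => (x < c)%R) s)%N.
Proof.
move=> ss iS ci.
rewrite -[in X in count _ X](cat_take_drop i s) count_cat.
apply: leq_trans (leq_addl _ _).
apply: count_all_ge; first by rewrite size_drop.
move=> j ji; rewrite nth_drop.
apply: le_lt_trans ci.
have tr : transitive (fun x y : R => y <= x).
  by move=> x y z h1 h2; apply: le_trans h2 h1.
have H := @sorted_leq_nth _ _ tr (fun x => lexx x) 0 s ss i (i + j).
by apply: H; rewrite ?inE /=; lia.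
Qed.

Lemma count3 (s : seq R) c :
  (count (pred1 c) s + count (fun x => (c < x)%R) s + count (fun x => (x < c)%R) s
   = size s)%N.
Proof.
elim: s => //= x s IH; case: (ltgtP x c) => [h|h|h] /=.
all: rewrite ?h ?eqxx ?ltxx /=; lia.
Qed.
End Sort.

Section Final.
Variable R : realDomainType.

Lemma final1 n d (s : seq R) c : sorted (fun x y => y <= x) s -> size s = n ->
  (count (fun x => (c < x)%R) s <= d)%N ->
  (count (fun x => (x < c)%R) s <= 1)%N ->
  (forall i : nat, (d <= i)%N -> (i < n.-1)%N -> s`_i = c) /\
  ((d < n)%N -> s`_(n.-1) <= c).
Proof.
move=> ss ss0 p1 p2; split.
  move=> i di ilt; have iS : (i < size s)%N by rewrite ss0; lia.
  case: (ltgtP (s`_i) c) => // h.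
    have := leq_trans (sorted_count_lt ss iS h) p2; rewrite ss0; lia.
  have := leq_trans (sorted_count_gt ss iS h) p1; lia.
move=> dn; rewrite leNgt; apply/negP => h.
have iS : (n.-1 < size s)%N by rewrite ss0; lia.
have := leq_trans (sorted_count_gt ss iS h) p1; lia.
Qed.

Lemma final2 n d (s : seq R) c : sorted (fun x y => y <= x) s -> size s = n ->
  (count (fun x => (c < x)%R) s <= d.+1)%N ->
  (count (fun x => (x < c)%R) s <= 0)%N ->
  (forall i : nat, (i < n)%N -> c <= s`_i) /\
  (n - d.+1 <= count (pred1 c) s)%N /\
  ((d.+1 < n)%N -> s`_(n.-1) = c).
Proof.
move=> ss ss0 p1 p2.
have lo : forall i : nat, (i < n)%N -> c <= s`_i.
  move=> i iS; rewrite leNgt; apply/negP => h.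
  have iS' : (i < size s)%N by rewrite ss0.
  have := leq_trans (sorted_count_lt ss iS' h) p2; rewrite ss0; lia.
split => //; split.
  have h3 := count3 s c; rewrite ss0 in h3.
  rewrite -h3 leq_subLR -addnA addnC leq_add2r.
  by apply: leq_trans (leq_add p1 p2) _; rewrite addn0.
move=> dn; apply: le_anti; rewrite lo ?andbT; last by lia.
rewrite leNgt; apply/negP => h.
have iS : (n.-1 < size s)%N by rewrite ss0; lia.
have := leq_trans (sorted_count_gt ss iS h) p1; lia.
Qed.
End Final.

Section Aux.
Local Open Scope sesquilinear_scope.
Local Open Scope complex_scope.

Lemma card_count n (p : pred 'I_n) : #|[pred i | p i]| = count p (enum 'I_n).
Proof. rewrite cardE /enum_mem size_filter count_filter; by apply: eq_count => i; rewrite !inE /= ?andbT. Qed.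

Variable R : rcfType.

Lemma ct_real m p (X : 'M[R]_(m, p)) :
  (map_mx (real_complex R) X) ^t* = map_mx (real_complex R) X^T.
Proof.
apply/matrixP => i j; rewrite !mxE /=.
by apply/eqP; rewrite eq_complex /= oppr0 !eqxx.
Qed.

Lemma q_ge0 m (x : 'rV[R[i]]_m) : 0 <= (x *m x ^t*) 0 0.
Proof.
rewrite mxE; apply: sumr_ge0 => k _; rewrite !mxE; exact: mul_conjC_ge0.
Qed.

End Aux.

Unset Implicit Arguments. Set Strict Implicit.

Theorem mainTheorem6 (R : realType) (n d : nat) (a b : R)
    (v : 'I_n -> 'rV[R]_d) (s : seq R) :
  -1 <= a -> a < b -> b < 1 ->
  (forall i, dotv (v i) (v i) = 1) ->
  (forall i j, i != j -> dotv (v i) (v j) = a \/ dotv (v i) (v j) = b) ->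
  eigenvalues_desc (seidelS a b v) s ->
  let c := (a + b - 2) / (b - a) in
  (0 <= a + b ->
     (forall i : nat, (d <= i)%N -> (i < n.-1)%N -> s`_i = c) /\
     ((d < n)%N -> s`_(n.-1) <= c)) /\
  (a + b < 0 ->
     (forall i : nat, (i < n)%N -> c <= s`_i) /\
     (n - d.+1 <= count (pred1 c) s)%N /\
     ((d.+1 < n)%N -> s`_(n.-1) = c)).
Proof.
move=> ha hab hb _ _ [ss hcp] c.
set t := a + b.
set e := b - a.
have e0 : 0 < e by rewrite subr_gt0.
set S := seidelS a b v.
pose V : 'M[R]_(n, d) := \matrix_(i, k) v i 0 k.
pose O : 'M[R]_(n, 1) := const_mx 1.
have hG : gram v = V *m V^T.
  by apply/matrixP => i j; rewrite !mxE /dotv; apply: eq_bigr => k _; rewrite !mxE.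
have hJ : const_mx 1 = O *m O^T :> 'M[R]_n.
  by apply/matrixP => i j; rewrite !mxE big_ord1 !mxE mulr1.
have hS : S - c%:M = e^-1 *: (2 *: (V *m V^T) - t *: (O *m O^T)).
  rewrite /S /seidelS -/t -/e hG hJ scalerDr scale_scalar_mx.
  rewrite -addrA (_ : e^-1 * (t - 2) = c) ?subrr ?addr0 //.
  by rewrite /c mulrC.
have dsym : forall i j, dotv (v i) (v j) = dotv (v j) (v i).
  by move=> i j; rewrite /dotv; apply: eq_bigr => k _; rewrite mulrC.
have Ssym : S^T = S.
  by apply/matrixP => i j; rewrite /S /seidelS !mxE dsym eq_sym.
have ss0 : size s = n.
  have := size_char_poly S; rewrite hcp size_prod_XsubC; case.
  by [].
Local Open Scope sesquilinear_scope.
pose f := real_complex R.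
pose SC := map_mx f S.
pose VC := map_mx f V.
pose OC := map_mx f O.
have hSC : SC - (f c)%:M = (f e^-1) *: (2 *: (VC *m VC ^t*) - (f t) *: (OC *m OC ^t*)).
  rewrite /VC /OC !ct_real -!map_mxM -map_scalar_mx -map_mxB hS.
  rewrite map_mxZ map_mxB !map_mxZ; congr (_ *: (_ - _)).
  by rewrite -[2%:R]/(2%:R) rmorph_nat.
have herm : SC \is hermsymmx.
  rewrite qualifE /= expr0 scale1r; apply/eqP.
  by rewrite /SC ct_real Ssym.
have /orthomx_spectralP eSC := hermitian_normalmx herm.
set P := spectralmx SC in eSC.
set D := spectral_diag SC in eSC.
have Pu : P \is unitarymx := spectral_unitarymx SC.
have PP : P *m P ^t* = 1%:M by apply/unitarymxP.
have PtP : P ^t* *m P = 1%:M := mulmx1C PP.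
rewrite invmx_unitary // in eSC.
have hperm : perm_eq (map f s) (map (fun i => D 0 i) (enum 'I_n)).
  apply: prod_XsubC_eq.
  rewrite big_map -map_prod_XsubC -hcp map_char_poly -/SC eSC.
  rewrite char_poly_conj // char_poly_trig ?diag_mx_is_trig //.
  rewrite big_map big_enum /=; apply: eq_bigr => i _.
  by rewrite mxE eqxx mulr1n.
pose D1 := \row_i (D 0 i - f c).
pose D2 := \row_i (f c - D 0 i).
have hA1 : P ^t* *m diag_mx D1 *m P = SC - (f c)%:M.
  have -> : diag_mx D1 = diag_mx D - (f c)%:M.
    apply/matrixP => i j; rewrite !mxE.
    by case: eqP => [->|_]; rewrite ?mulr1n ?mulr0n ?subrr ?oppr0 ?addr0.
  by rewrite mulmxBr mulmxBl -eSC mul_mx_scalar -scalemxAl PtP scalemx1.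
have hA2 : P ^t* *m diag_mx D2 *m P = - (SC - (f c)%:M).
  have -> : diag_mx D2 = - (diag_mx D - (f c)%:M).
    apply/matrixP => i j; rewrite !mxE.
    by case: eqP => [->|_]; rewrite ?mulr1n ?mulr0n ?subrr ?oppr0 ?addr0 ?opprB.
  by rewrite mulmxN mulNmx mulmxBr mulmxBl -eSC mul_mx_scalar -scalemxAl PtP scalemx1.
pose q m (x : 'rV[R[i]]_m) := (x *m x ^t*) 0 0.
have qf : forall w : 'rV_n, (w *m (SC - (f c)%:M) *m w ^t*) 0 0 =
    f e^-1 * (2 * q _ (w *m VC) - f t * q _ (w *m OC)).
  move=> w; rewrite hSC -scalemxAr -scalemxAl mxE; congr (_ * _).
  have lin : forall (x y : R[i]) (A B : 'M[R[i]]_1),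
      (x *: A - y *: B) 0 0 = x * A 0 0 - y * B 0 0 by move=> *; rewrite !mxE.
  rewrite mulmxBr mulmxBl -!scalemxAr -!scalemxAl lin.
  by rewrite /q !ctM !mulmxA.
have cnt1 : #|[pred i | (0 < D1 0 i)%R]| = count (fun x => (c < x)%R) s.
  rewrite card_count.
  transitivity (count (fun z => (f c < z)%R) (map (fun i => D 0 i) (enum 'I_n))).
    by rewrite [RHS]count_map; apply: eq_count => i /=; rewrite mxE subr_gt0.
  by rewrite -(permP hperm) count_map; apply: eq_count => x /=; exact: ltcR.
have cnt2 : #|[pred i | (0 < D2 0 i)%R]| = count (fun x => (x < c)%R) s.
  rewrite card_count.
  transitivity (count (fun z => (z < f c)%R) (map (fun i => D 0 i) (enum 'I_n))).
    by rewrite [RHS]count_map; apply: eq_count => i /=; rewrite mxE subr_gt0.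
  by rewrite -(permP hperm) count_map; apply: eq_count => x /=; exact: ltcR.
have q0 : forall m, q m 0 = 0 by move=> m; rewrite /q mul0mx mxE.
have qge : forall m x, 0 <= q m x by move=> m x; exact: q_ge0.
have negE : forall (A : 'M[R[i]]_1), (- A) 0 0 = - A 0 0 by move=> A; rewrite mxE.
have fe0 : 0 <= f e^-1 by rewrite ler0c invr_ge0 ltW.
have hneg : forall w : 'rV_n,
    (w *m (P ^t* *m diag_mx D2 *m P) *m w ^t*) 0 0 =
    - (f e^-1 * (2 * q _ (w *m VC) - f t * q _ (w *m OC))).
  by move=> w; rewrite hA2 mulmxN mulNmx negE qf.
have hpos : forall w : 'rV_n,
    (w *m (P ^t* *m diag_mx D1 *m P) *m w ^t*) 0 0 =
    f e^-1 * (2 * q _ (w *m VC) - f t * q _ (w *m OC)).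
  by move=> w; rewrite hA1 qf.
have tr : forall i, (i < n)%N -> (i < size s)%N by move=> i; rewrite ss0.
split => ht.
  have p1 : (count (fun x => (c < x)%R) s <= d)%N.
    rewrite -cnt1; apply: (@core _ n d P D1 VC PP) => w hw.
    rewrite hpos hw q0 mulr0 sub0r mulrN oppr_le0.
    by apply: mulr_ge0 => //; apply: mulr_ge0 => //; rewrite ler0c.
  have p2 : (count (fun x => (x < c)%R) s <= 1)%N.
    rewrite -cnt2; apply: (@core _ n 1 P D2 OC PP) => w hw.
    rewrite hneg hw q0 mulr0 subr0 oppr_le0.
    by apply: mulr_ge0 => //; apply: mulr_ge0 => //; rewrite ler0n.
  exact: final1 ss ss0 p1 p2.
have p1 : (count (fun x => (c < x)%R) s <= d.+1)%N.
  rewrite -cnt1 -[d.+1]addn1; apply: (@core _ n (d + 1) P D1 (row_mx VC OC) PP) => w.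
  move=> /eqP; rewrite mul_mx_row -row_mx0 => /eqP /eq_row_mx [h1 h2].
  by rewrite hpos h1 h2 !q0 !mulr0 subrr mulr0.
have p2 : (count (fun x => (x < c)%R) s <= 0)%N.
  rewrite -cnt2; apply: (@core _ n 0 P D2 0 PP) => w _.
  rewrite hneg oppr_le0; apply: mulr_ge0 => //.
  rewrite -mulNr; apply: addr_ge0; apply: mulr_ge0 => //.
  by rewrite -rmorphN ler0c oppr_ge0 ltW.
exact: final2 ss ss0 p1 p2.
Qed.
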